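(* Let $q,t\in\mathbb N$ and let $M$ be a multigraph (without loops) with $V(M)=[t]$ and maximum degree at most $qt$. Then there is an $M$-linkage $Q=(P_{uv})_{uv\in E(M)}$ in the complete graph $K_t$ on $[t]$ such that every edge of $K_t$ lies on at most $18q$ of the paths in $Q$.
   Context: For a graph $H$ and a multigraph $M$ with $V(M)\subseteq V(H)$, an $M$-linkage in $H$ is a family of paths $(P_e)_{e\in E(M)}$ in $H$ (one per edge of $M$, counting multiplicity) such that $P_e$ has the two endpoints of $e$ as its endpoints. Degrees in multigraphs count multiplicities. *)

(* Defs.v *)
From mathcomp Require Import all_boot.
Set Implicit Arguments. Unset Strict Implicit. Unset Printing Implicit Defensive.

(* A loopless multigraph on vertex set [t] = 'I_t is given by the sequence of
   its edges (an edge {u,v} of multiplicity m appears m times, in either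
   orientation). *)
Definition loopless (t : nat) (E : seq ('I_t * 'I_t)) : bool :=
  all (fun e => e.1 != e.2) E.

Definition mdeg (t : nat) (E : seq ('I_t * 'I_t)) (v : 'I_t) : nat :=
  count (fun e => (e.1 == v) || (e.2 == v)) E.

(* p is a path in the complete graph K_t from u to v: a duplicate-free
   vertex sequence starting at u and ending at v (consecutive vertices are
   distinct, hence adjacent in K_t). *)
Definition Kt_path (t : nat) (u v : 'I_t) (p : seq 'I_t) : bool :=
  [&& head u p == u, last u p == v, p != [::] & uniq p].

Definition on_path (t : nat) (a b : 'I_t) (p : seq 'I_t) : bool :=
  has (fun xy => (xy == (a, b)) || (xy == (b, a))) (zip p (behead p)).

Definition linkage (t : nat) (E : seq ('I_t * 'I_t)) (P : seq (seq 'I_t)) : bool :=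
  all2 (fun e p => Kt_path e.1 e.2 p) E P.

(* Main.v *)
Require Import Defs.
From mathcomp Require Import all_boot.
From mathcomp Require Import zify.

Set Implicit Arguments. Unset Strict Implicit. Unset Printing Implicit Defensive.

Definition path3 (t : nat) (tr : 'I_t * 'I_t * 'I_t) : seq 'I_t :=
  [:: tr.1.1; tr.1.2; tr.2].

Definition onp (t : nat) (a b : 'I_t) (tr : 'I_t * 'I_t * 'I_t) : bool :=
  [|| (tr.1.1 == a) && (tr.1.2 == b), (tr.1.1 == b) && (tr.1.2 == a),
      (tr.1.2 == a) && (tr.2 == b) | (tr.1.2 == b) && (tr.2 == a)].

Definition load (t : nat) (a b : 'I_t) (T : seq ('I_t * 'I_t * 'I_t)) :=
  count (onp a b) T.

Definition mid (t : nat) (w : 'I_t) (T : seq ('I_t * 'I_t * 'I_t)) :=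
  count (fun tr => tr.1.2 == w) T.

Definition good (t : nat) (e : 'I_t * 'I_t) (tr : 'I_t * 'I_t * 'I_t) : bool :=
  [&& tr.1.1 == e.1, tr.2 == e.2, tr.1.2 != e.1 & tr.1.2 != e.2].

Lemma on_path3 (t : nat) (a b : 'I_t) tr : on_path a b (path3 tr) = onp a b tr.
Proof.
case: tr => [[u w] v]; rewrite /on_path /onp /= !xpair_eqE orbF -!orbA.
by [].
Qed.

Lemma onp_sym (t : nat) (a b : 'I_t) tr : onp a b tr = onp b a tr.
Proof.
rewrite /onp.
by case: (tr.1.1 == a); case: (tr.1.1 == b); case: (tr.1.2 == a);
  case: (tr.1.2 == b); case: (tr.2 == a); case: (tr.2 == b).
Qed.

Lemma load_sym (t : nat) (a b : 'I_t) T : load a b T = load b a T.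
Proof. by apply: eq_count => tr; rewrite onp_sym. Qed.

Lemma sum_eq1 (t : nat) (c : 'I_t) : \sum_(x : 'I_t) ((c == x) : nat) = 1.
Proof.
rewrite (bigD1 c) //= eqxx big1 // => x; rewrite eq_sym => /negbTE ->.
by [].
Qed.

Lemma bool8 (b1 b2 b3 b4 b5 b6 b7 b8 : bool) :
  [|| b1 && b2, b3 && b4, b5 && b6 | b7 && b8] <= b1 * b2 + b3 * b4 + b5 * b6 + b7 * b8.
Proof. by case: b1; case: b2; case: b3; case: b4; case: b5; case: b6; case: b7; case: b8. Qed.

Lemma onp_sum (t : nat) (u : 'I_t) tr :
  \sum_(x : 'I_t) onp u x tr <= (tr.1.1 == u) + (tr.2 == u) + 2 * (tr.1.2 == u).
Proof.
apply: (@leq_trans (\sum_(x : 'I_t) ((tr.1.1 == u) * (tr.1.2 == x) + (tr.1.1 == x) * (tr.1.2 == u)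
   + (tr.1.2 == u) * (tr.2 == x) + (tr.1.2 == x) * (tr.2 == u)))).
  by apply: leq_sum => x _; rewrite /onp; exact: bool8.
rewrite !big_split /=.
have e1 : \sum_(x : 'I_t) (tr.1.1 == x) * (tr.1.2 == u) = (tr.1.2 == u : nat).
  by rewrite -big_distrl /= sum_eq1 mul1n.
have e2 : \sum_(x : 'I_t) (tr.1.2 == x) * (tr.2 == u) = (tr.2 == u : nat).
  by rewrite -big_distrl /= sum_eq1 mul1n.
rewrite e1 e2 -!big_distrr /= !sum_eq1 !muln1.
lia.
Qed.

Lemma eq2 (t : nat) (a b u : 'I_t) : a != b -> (a == u) + (b == u) <= (a == u) || (b == u).
Proof.
move=> ab; case: (a =P u) => [<-|_]; last by case: (b == u).
have -> : (b == a) = false by rewrite eq_sym (negbTE ab).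
by [].
Qed.

Lemma sum_load (t : nat) (u : 'I_t) E T :
  all2 (@good t) E T -> loopless E -> \sum_x load u x T <= mdeg E u + 2 * mid u T.
Proof.
elim: E T => [|e E IH] [|tr T] //=.
  by move=> _ _; rewrite big1.
move=> /andP[g gs] /andP[ne le].
rewrite (eq_bigr (fun x => onp u x tr + load u x T)) // big_split /=.
have H1 := onp_sum u tr.
have H2 := IH T gs le.
move: g => /and4P[/eqP h1 /eqP h2 _ _].
rewrite h1 h2 in H1.
have H3 := eq2 u ne.
rewrite /mdeg /mid /= -/(mdeg E u) -/(mid u T).
move: H1 H2 H3.
move: (\sum_(i < t) onp u i tr) (\sum_(i < t) load u i T) => s1 s2.
move: (nat_of_bool ((e.1 == u) || (e.2 == u))) => c.
move: (nat_of_bool (e.1 == u)) (nat_of_bool (e.2 == u)) (nat_of_bool (tr.1.2 == u)) => x1 x2 x3.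
lia.
Qed.

Lemma sum_mid (t : nat) T : \sum_(w : 'I_t) mid w T = size T.
Proof.
elim: T => [|tr T IH] /=; first by rewrite big1.
rewrite (eq_bigr (fun w => (tr.1.2 == w) + mid w T)) // big_split /= sum_eq1 IH.
by [].
Qed.

Lemma sum_mdeg (t : nat) (E : seq ('I_t * 'I_t)) :
  loopless E -> 2 * size E <= \sum_v mdeg E v.
Proof.
elim: E => [|e E IH] //= /andP[ne le].
rewrite (eq_bigr (fun v => ((e.1 == v) || (e.2 == v)) + mdeg E v)) // big_split /=.
have H : 2 <= \sum_(v : 'I_t) ((e.1 == v) || (e.2 == v)).
  apply: (@leq_trans (\sum_(v : 'I_t) ((e.1 == v) + (e.2 == v)))).
    by rewrite big_split /= !sum_eq1.
  by apply: leq_sum => v _; exact: eq2.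
have := IH le; move: H; move: (\sum_(v < t) ((e.1 == v) || (e.2 == v)) : nat) => c; move: (\sum_v mdeg E v) => d; lia.
Qed.

Lemma markov (t : nat) (f : 'I_t -> nat) L :
  #|[set x | L <= f x]| * L <= \sum_x f x.
Proof.
rewrite -sum_nat_const.
apply: leq_trans (_ : \sum_(i in [set x | L <= f x]) f i <= _).
  by apply: leq_sum => i; rewrite inE.
rewrite [X in _ <= X](bigID (mem [set x | L <= f x])) /=.
exact: leq_addr.
Qed.

Lemma all2_size (S T : Type) (r : S -> T -> bool) s1 s2 :
  all2 r s1 s2 -> size s1 = size s2.
Proof. by rewrite all2E => /andP[/eqP]. Qed.

Lemma large (q t : nat) : 0 < q -> 18 < t -> forall E : seq ('I_t * 'I_t),
  loopless E -> (forall v, mdeg E v <= q * t) ->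
  exists T, [/\ all2 (@good t) E T,
             forall a b, a != b -> load a b T <= 18 * q &
             forall w, mid w T <= q * t].
Proof.
move=> q0 t18; elim => [|[u v] E IH] /=.
  by move=> _ _; exists [::]; split.
move=> /andP[ne le] hdeg.
have hdeg' : forall x, mdeg E x <= q * t.
  by move=> x; apply: leq_trans (hdeg x); rewrite /mdeg /= leq_addl.
have [T [gs hload hmid]] := IH le hdeg'.
set L := 18 * q.
set S1 := [set x | L <= load u x T].
set S2 := [set x | L <= load v x T].
set S3 := [set x | q * t <= mid x T].
set S := S1 :|: S2 :|: S3 :|: [set u; v].
have c1 : #|S1| * L <= 3 * (q * t).
  apply: leq_trans (markov _ _) _.
  apply: leq_trans (sum_load u gs le) _.
  have := hdeg' u; have := hmid u; lia.
have c2 : #|S2| * L <= 3 * (q * t).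
  apply: leq_trans (markov _ _) _.
  apply: leq_trans (sum_load v gs le) _.
  have := hdeg' v; have := hmid v; lia.
have c3 : #|S3| * (q * t) * 2 <= t * (q * t).
  have h := markov (fun x => mid x T) (q * t).
  rewrite sum_mid -(all2_size gs) in h.
  have h2 := sum_mdeg le.
  have h3 : \sum_v mdeg E v <= \sum_(v : 'I_t) (q * t) by apply: leq_sum.
  rewrite sum_nat_const card_ord in h3.
  rewrite -/S3 in h. lia.
have qt0 : 0 < q * t by rewrite muln_gt0 q0; lia.
have d1 : 6 * #|S1| <= t.
  rewrite -(leq_pmul2l (_ : 0 < 3 * q)); last by lia.
  move: c1; rewrite /L. lia.
have d2 : 6 * #|S2| <= t.
  rewrite -(leq_pmul2l (_ : 0 < 3 * q)); last by lia.
  move: c2; rewrite /L. lia.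
have d3 : 2 * #|S3| <= t.
  rewrite -(leq_pmul2r qt0). move: c3. lia.
have cS : #|S| < t.
  have h1 : #|S| <= #|S1 :|: S2 :|: S3| + #|[set u; v]| := leq_card_setU _ _.
  have h2 : #|S1 :|: S2 :|: S3| <= #|S1 :|: S2| + #|S3| := leq_card_setU _ _.
  have h3 : #|S1 :|: S2| <= #|S1| + #|S2| := leq_card_setU _ _.
  have h4 : #|[set u; v]| <= 2 by rewrite cards2; case: (u != v).
  lia.
have : 0 < #|~: S| by have := cardsC S; rewrite card_ord; lia.
rewrite card_gt0 => /set0Pn[w]; rewrite !inE negb_or => /andP[].
rewrite !negb_or => /andP[/andP[wS1 wS2] wS3] /andP[wu wv].
move: wS1 wS2 wS3; rewrite -!ltnNge => wS1 wS2 wS3.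
exists ((u, w, v) :: T); split.
- by rewrite /= gs /good /= !eqxx wu wv.
- move=> a b ab; rewrite /load /= -/(load a b T).
  have [h|h] := boolP (onp a b (u, w, v)); last first.
    by rewrite add0n hload.
  rewrite add1n.
  move: h; rewrite /onp /= => /or4P[] /andP[/eqP <- /eqP <-] //.
  + by rewrite load_sym.
  + by rewrite load_sym.
- move=> x; rewrite /mid /= -/(mid x T).
  case: (w =P x) => [<-|_] //=.
  by rewrite add0n hmid.
Qed.

Theorem mainTheorem16 (q t : nat) (E : seq ('I_t * 'I_t)) :
  loopless E ->
  (forall v : 'I_t, mdeg E v <= q * t) ->
  exists P : seq (seq 'I_t),
    linkage E P /\
    (forall a b : 'I_t, a != b -> count (on_path a b) P <= 18 * q).
Proof.
move=> le hdeg.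
case: (leqP (q * t) (18 * q)) => hqt.
  exists (map (fun e => [:: e.1; e.2]) E); split.
    elim: E le {hdeg} => [|e E IH] //= /andP[ne le].
    by rewrite IH // /Kt_path /= !eqxx /= inE ne.
  move=> a b ab; rewrite count_map.
  apply: leq_trans hqt; apply: leq_trans (hdeg a); apply: sub_count.
  move=> [x y]; rewrite /on_path /= orbF !xpair_eqE.
  by case/orP => /andP[/eqP -> /eqP ->]; rewrite eqxx ?orbT.
have q0 : 0 < q by rewrite lt0n; apply/eqP => q0; move: hqt; rewrite q0 !muln0.
have t18 : 18 < t by rewrite mulnC ltn_pmul2l in hqt.
have [T [gs hload _]] := large q0 t18 le hdeg.
exists (map (@path3 t) T); split.
  elim: E T le gs {hdeg hload} => [|e E IH] [|tr T] //= /andP[ne le] /andP[g gs].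
  rewrite IH // andbT.
  move: g => /and4P[/eqP h1 /eqP h2 w1 w2].
  rewrite /Kt_path /path3 /= h1 h2 eqxx /= !inE negb_or.
  by rewrite eqxx ne w2 andbT eq_sym w1.
by move=> a b ab; rewrite count_map (eq_count (on_path3 a b)) hload.
Qed.
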